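(* Fix a finite vertex set $\mathcal{V}$ and a partition $\mathcal{C}$ of $\mathcal{V}$ in which at least one part has at least two vertices. For an attributed graph $G$ on $\mathcal{V}$, let $n_\triangle^{intra}(G)$ be the number of triangles of $G$ all three of whose vertices lie in the same part of $\mathcal{C}$. Then the global sensitivity of $n_\triangle^{intra}$ is $$\max_{G\sim_{at}G'}\bigl|n_\triangle^{intra}(G)-n_\triangle^{intra}(G')\bigr|=\max_{C\in\mathcal{C}}\{|C|-2\}.$$
   Context: An attributed graph is a triple $G=(\mathcal{V},\mathcal{E},X)$ with $\mathcal{V}$ a finite vertex set, $\mathcal{E}$ a set of undirected edges (simple graph), and $X$ a binary matrix assigning to each vertex an attribute vector. Two attributed graphs $G=(\mathcal{V},\mathcal{E},X)$ and $G'=(\mathcal{V},\mathcal{E}',X')$ on the same vertex set are neighbouring, $G\sim_{at}G'$, iff either $|\mathcal{E}\,\triangle\,\mathcal{E}'|=1$ (and the attributes coincide), or they have the same edges and differ in the attribute vector of exactly one vertex. The partition $\mathcal{C}$ is fixed (the same for all graphs considered). *)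

(* Defs.v *)
From mathcomp Require Import all_boot.
Set Implicit Arguments. Unset Strict Implicit. Unset Printing Implicit Defensive.

(* An attributed graph on the finite vertex type V with attribute vectors of
   length d: (edge set, attribute map).  Edges are 2-element vertex sets. *)
Definition agraph (V : finType) (d : nat) : finType :=
  ({set {set V}} * {ffun V -> d.-tuple bool})%type.

Definition edges (V : finType) d (G : agraph V d) : {set {set V}} := G.1.
Definition attrs (V : finType) d (G : agraph V d) : {ffun V -> d.-tuple bool} := G.2.

Definition simple_ag (V : finType) d (G : agraph V d) : bool :=
  [forall e in edges G, #|e| == 2].

Definition at_neighbour (V : finType) d (G G' : agraph V d) : bool :=
  ((#|(edges G :\: edges G') :|: (edges G' :\: edges G)| == 1)
     && (attrs G == attrs G'))
  || ((edges G == edges G')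
     && (#|[set v | attrs G v != attrs G' v]| == 1)).

Definition n_tri_intra (V : finType) d (P : {set {set V}}) (G : agraph V d) : nat :=
  #|[set T : {set V} | [&& #|T| == 3,
        [forall x in T, forall y in T, (x != y) ==> ([set x; y] \in edges G)]
      & [exists C in P, T \subset C]]]|.

Definition distn (a b : nat) : nat := (a - b) + (b - a).

Definition global_sensitivity (V : finType) d (f : agraph V d -> nat) : nat :=
  \max_(p : agraph V d * agraph V d |
          [&& simple_ag p.1, simple_ag p.2 & at_neighbour p.1 p.2])
     distn (f p.1) (f p.2).

(* Main.v *)
Require Import Defs.
From mathcomp Require Import all_boot zify.
Set Implicit Arguments. Unset Strict Implicit.
Section S.
Variable V : finType.
Variable P : {set {set V}}.
Definition tri (E : {set {set V}}) : {set {set V}} :=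
  [set T : {set V} | [&& #|T| == 3,
        [forall x in T, forall y in T, (x != y) ==> ([set x; y] \in E)]
      & [exists C in P, T \subset C]]].

Lemma tri_out E E' T : T \in tri E -> T \notin tri E' ->
  exists x y, [/\ x \in T, y \in T, x != y, [set x;y] \in E & [set x;y] \notin E'].
Proof.
rewrite !inE => /and3P[h3 /forall_inP hall hC].
rewrite h3 hC andbT /= => /forall_inPn [x xT /forall_inPn [y yT]].
rewrite negb_imply => /andP[xy nE].
exists x, y; split => //.
by have /forall_inP/(_ y yT)/implyP := hall x xT; apply.
Qed.
Hypothesis hP : partition P [set: V].

Lemma diff_bound E E' : #|(E :\: E') :|: (E' :\: E)| == 1 ->
  #|tri E :\: tri E'| <= \max_(C in P) (#|C| - 2).
Proof.
move=> /cards1P [e he].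
case: (set_0Vmem (tri E :\: tri E')) => [-> | [T0]]; first by rewrite cards0.
rewrite inE => /andP[T0n T0i].
have [x [y [xT0 yT0 xy xE xE']]] := tri_out T0i T0n.
have key : forall z w, [set z; w] \in E -> [set z; w] \notin E' -> [set z; w] = [set x; y].
  move=> z w zE zE'.
  have: [set z; w] \in [set e] by rewrite -he !inE zE zE'.
  have: [set x; y] \in [set e] by rewrite -he !inE xE xE'.
  by rewrite !inE => /eqP -> /eqP ->.
case/and3P: hP => /eqP hcov htriv _.
have xcov : x \in cover P by rewrite hcov inE.
set C := pblock P x.
have CP : C \in P by exact: pblock_mem.
have c2 : #|[set x; y]| = 2 by rewrite cards2 xy.
apply: (@leq_trans #|C :\: [set x; y]|).
  apply: (@leq_trans #|(fun w => w |: [set x; y]) @: (C :\: [set x; y])|); last first.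
    exact: leq_imset_card.
  apply: subset_leq_card; apply/subsetP => T.
  rewrite inE => /andP[Tn Ti].
  have [z [w [zT wT zw zE zE']]] := tri_out Ti Tn.
  have exy := key z w zE zE'.
  have sxy : [set x; y] \subset T.
    by rewrite -exy; apply/subsetP => u /set2P [] ->.
  have xT : x \in T by apply: (subsetP sxy); rewrite set21.
  move: Ti; rewrite inE => /and3P[/eqP T3 _ /exists_inP [C' C'P TC']].
  have eC : C = C'.
    by apply: def_pblock => //; apply: (subsetP TC').
  have : #|T :\: [set x; y]| == 1.
    by rewrite cardsD (setIidPr sxy) T3 c2.
  move=> /cards1P [w0 hw0].
  have w0T : w0 \in T :\: [set x; y] by rewrite hw0 set11.
  apply/imsetP; exists w0.
    move: w0T; rewrite inE => /andP[w0n w0T]; rewrite inE w0n eC /=; exact: (subsetP TC').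
  apply/setP => u; rewrite in_setU1.
  case: (boolP (u \in [set x; y])) => hu.
    by rewrite (subsetP sxy _ hu) orbT.
  rewrite orbF.
  have : (u \in T :\: [set x; y]) = (u == w0) by rewrite hw0 inE.
  by rewrite inE hu.
rewrite cardsD (setIidPr _) ?c2.
  by apply: leq_trans (leq_bigmax_cond _ CP); rewrite leqnn.
move: T0i; rewrite inE => /and3P[_ _ /exists_inP [C0 C0P TC0]].
have -> : C = C0 by apply: def_pblock => //; apply: (subsetP TC0).
by apply/subsetP => u /set2P [] ->; apply: (subsetP TC0).
Qed.

Lemma card_diff_le (A B : {set {set V}}) : #|A| - #|B| <= #|A :\: B|.
Proof.
rewrite -(cardsID B A) leq_subLR leq_add2r; apply: subset_leq_card; exact: subsetIr.
Qed.

Lemma tri_in (E : {set {set V}}) (C T : {set V}) : C \in P -> T \subset C -> #|T| = 3 ->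
  (forall u v, u \in C -> v \in C -> u != v -> [set u; v] \in E) -> T \in tri E.
Proof.
move=> CP TC T3 hE; rewrite inE T3 eqxx /=; apply/andP; split.
  apply/forall_inP => u uT; apply/forall_inP => v vT; apply/implyP => uv.
  by apply: hE => //; apply: (subsetP TC).
by apply/exists_inP; exists C.
Qed.
End S.

Theorem proposition3 (V : finType) (d : nat) (P : {set {set V}})
    (hP : partition P [set: V])
    (hbig : exists2 C, C \in P & 1 < #|C|) :
  global_sensitivity (n_tri_intra (d := d) P) = \max_(C in P) (#|C| - 2).
Proof.
have nE : forall G : agraph V d, n_tri_intra P G = #|tri P (edges G)| by [].
rewrite /global_sensitivity; apply/eqP; rewrite eqn_leq; apply/andP; split.
  apply/bigmax_leqP => [[G G']] /= /and3P[_ _ hn]; rewrite !nE.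
  case/orP: hn => [/andP[h1 _] | /andP[/eqP he _]]; last first.
    by rewrite he /distn subnn.
  have h2 : #|(edges G' :\: edges G) :|: (edges G :\: edges G')| == 1 by rewrite setUC.
  rewrite /distn.
  have a1 := leq_trans (card_diff_le _ _) (diff_bound hP h1).
  have a2 := leq_trans (card_diff_le _ _) (diff_bound hP h2).
  set a := #|tri P (edges G)| in a1 a2 *; set b := #|tri P (edges G')| in a1 a2 *.
  case: (leqP a b) => hab.
    by move: (hab); rewrite -subn_eq0 => /eqP ->.
  by move: (ltnW hab); rewrite -subn_eq0 => /eqP ->; rewrite addn0.
have [C CP hmax] : {C | C \in P & \max_(C in P) (#|C| - 2) = #|C| - 2}.
  apply: eq_bigmax_cond; case: hbig => C0 C0P _; apply/card_gt0P; by exists C0.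
rewrite hmax.
case: (leqP #|C| 2) => hC; first by move: hC; rewrite -subn_eq0 => /eqP ->.
have [x [y [xC yC xy]]] : exists x y, [/\ x \in C, y \in C & x != y].
  by apply/card_gt1P; apply: ltnW.
set E := [set e : {set V} | (#|e| == 2) && (e \subset C)].
set e0 := [set x; y].
set E' := E :\ e0.
pose a : {ffun V -> d.-tuple bool} := [ffun=> nseq_tuple d false].
pose G : agraph V d := (E, a).
pose G' : agraph V d := (E', a).
have e0E : e0 \in E.
  by rewrite inE cards2 xy eqxx /=; apply/subsetP => u /set2P [] ->.
have hEC : forall u v, u \in C -> v \in C -> u != v -> [set u; v] \in E.
  by move=> u v uC vC uv; rewrite inE cards2 uv eqxx /=; apply/subsetP => w /set2P [] ->.
have simG : simple_ag G by apply/forall_inP => u; rewrite inE => /andP[].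
have simG' : simple_ag G'.
  by apply/forall_inP => u; rewrite !inE => /andP[_ /andP[]].
have nb : at_neighbour G G'.
  apply/orP; left; rewrite eqxx andbT; apply/cards1P; exists e0.
  apply/setP => u; rewrite /edges /= !inE.
  case: (boolP (u == e0)) => [/eqP -> | hu].
    by move: e0E; rewrite inE => /andP[-> ->].
  case: (#|u| == 2); case: (u \subset C); rewrite /= ?andbT ?andbF ?orbF //; apply/negbTE; exact: hu.
have hc : [&& simple_ag (G, G').1, simple_ag (G, G').2 & at_neighbour (G, G').1 (G, G').2].
  by rewrite /= simG simG' nb.
have := @leq_bigmax_cond _ (fun p : agraph V d * agraph V d => [&& simple_ag p.1, simple_ag p.2 & at_neighbour p.1 p.2]) (fun p => distn (n_tri_intra P p.1) (n_tri_intra P p.2)) (G, G') hc.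
apply: leq_trans.
rewrite /= !nE /edges /=.
apply: leq_trans (leq_addr _ _).
have sub : tri P E' \subset tri P E.
  apply/subsetP => T; rewrite !inE => /and3P[-> /forall_inP h ->]; rewrite andbT /=.
  apply/forall_inP => u uT; apply/forall_inP => v vT; apply/implyP => uv.
  by have := h u uT => /forall_inP /(_ v vT) /implyP /(_ uv); rewrite !inE => /andP[].
rewrite -(setIidPr sub) -cardsD.
have c2 : #|e0| = 2 by rewrite cards2 xy.
have sC : e0 \subset C by apply/subsetP => u /set2P [] ->.
rewrite -c2 -(setIidPr sC) -cardsD.
rewrite -(@card_in_imset _ _ (fun w => w |: e0)); last first.
  move=> w1 w2; rewrite !inE => /andP[w1n _] /andP[w2n _] heq.
  have : w1 \in w2 |: e0 by rewrite -heq setU11.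
  rewrite in_setU1 => /orP[/eqP // | h1]; by rewrite !inE in h1; rewrite h1 in w1n.
apply: subset_leq_card; apply/subsetP => T /imsetP [w]; rewrite inE => /andP[wn wC] ->.
have TC : w |: e0 \subset C by rewrite subUset sub1set wC sC.
have T3 : #|w |: e0| = 3 by rewrite cardsU1 wn c2.
rewrite inE; apply/andP; split.
  apply/negP; rewrite inE => /and3P[_ /forall_inP h _].
  have := h x; rewrite in_setU1 set21 orbT => /(_ isT) /forall_inP /(_ y).
  rewrite in_setU1 set22 orbT => /(_ isT) /implyP /(_ xy).
  by rewrite !inE eqxx.
exact: tri_in CP TC T3 hEC.
Qed.
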